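(* Let $\Lambda$ be a left-artinian ring, $\mathcal{C}=\mathrm{mod}(\Lambda)$, let $\beta$ be a radical and $\alpha$ a pre-radical on $\mathcal{C}$. If $\mathcal{F}_\alpha\subseteq\mathcal{T}_\beta$, then for every $M\in\mathcal{C}$ we have $\mathrm{soc}(q_\beta(M))\in\mathcal{T}_\alpha\cap\mathcal{F}_\beta$.
   Context: $\mathcal{C}$ is the category of finitely generated left $\Lambda$-modules. A pre-radical is an additive subfunctor $\alpha$ of the identity functor; for it, $q_\alpha:=\mathrm{Id}/\alpha$, so $q_\alpha(M)=M/\alpha(M)$. A radical is a pre-radical $\beta$ with $\beta\circ q_\beta=0$. $\mathcal{F}_\alpha=\{M:\alpha(M)=0\}$, $\mathcal{T}_\alpha=\{M:\alpha(M)=M\}$. *)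

(* Defs.v *)
From HB Require Import structures.
From mathcomp Require Import all_boot all_order all_algebra.
Set Implicit Arguments. Unset Strict Implicit. Unset Printing Implicit Defensive.
Import GRing.Theory.
Local Open Scope ring_scope.

(* Modules over Lambda are MathComp left modules [lmodType R].
   Subsets (submodules, values of pre-radicals) are Prop-valued predicates. *)

Section ModDefs.
Variable R : nzRingType.

Definition left_ideal (I : R -> Prop) : Prop :=
  I 0 /\ (forall x y, I x -> I y -> I (x - y)) /\ (forall r x, I x -> I (r * x)).

Definition left_artinian : Prop :=
  forall I : nat -> R -> Prop,
    (forall n, left_ideal (I n)) ->
    (forall n x, I n.+1 x -> I n x) ->
    exists n, forall m, (n <= m)%N -> forall x, I m x <-> I n x.

Definition submodule (M : lmodType R) (S : M -> Prop) : Prop :=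
  S 0 /\ (forall x y, S x -> S y -> S (x + y)) /\ (forall (a : R) x, S x -> S (a *: x)).

Definition fin_gen (M : lmodType R) : Prop :=
  exists s : seq M, forall x : M,
    exists c : 'I_(size s) -> R, x = \sum_(i < size s) c i *: s`_i.

(* A pre-radical on C = mod(R): an assignment M |-> alpha(M) of a submodule
   to every finitely generated module, such that every morphism f : M -> N
   in C maps alpha(M) into alpha(N) (subfunctor of the identity; additivity
   is automatic for subfunctors of Id). Values on non-f.g. modules are
   irrelevant. *)
Definition preradical (alpha : forall M : lmodType R, M -> Prop) : Prop :=
  (forall M : lmodType R, fin_gen M -> submodule (alpha M)) /\
  (forall (M N : lmodType R) (f : {linear M -> N}),
      fin_gen M -> fin_gen N -> forall x, alpha M x -> alpha N (f x)).

Definition is_quotient_by (M Q : lmodType R) (S : M -> Prop) (p : {linear M -> Q}) : Prop :=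
  (forall y : Q, exists x : M, p x = y) /\ (forall x : M, p x = 0 <-> S x).

(* i : S -> Q presents S as (isomorphic to) the submodule N of Q *)
Definition is_submodule_iso (S Q : lmodType R) (N : Q -> Prop) (i : {linear S -> Q}) : Prop :=
  injective i /\ (forall y : Q, N y <-> exists x : S, i x = y).

Definition radical (beta : forall M : lmodType R, M -> Prop) : Prop :=
  preradical beta /\
  forall (M Q : lmodType R) (p : {linear M -> Q}),
    fin_gen M -> is_quotient_by (beta M) p -> forall y : Q, beta Q y -> y = 0.

Definition in_F (alpha : forall M : lmodType R, M -> Prop) (M : lmodType R) : Prop :=
  fin_gen M /\ forall x : M, alpha M x -> x = 0.
Definition in_T (alpha : forall M : lmodType R, M -> Prop) (M : lmodType R) : Prop :=
  fin_gen M /\ forall x : M, alpha M x.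

Definition simple_submodule (M : lmodType R) (S : M -> Prop) : Prop :=
  submodule S /\ (exists x, S x /\ x <> 0) /\
  forall T : M -> Prop, submodule T -> (forall x, T x -> S x) ->
    (forall x, T x -> x = 0) \/ (forall x, S x -> T x).

Definition socle (M : lmodType R) (x : M) : Prop :=
  exists s : seq M,
    (forall y, y \in s -> exists S, simple_submodule S /\ S y) /\
    x = \sum_(y <- s) y.

End ModDefs.

(* Main.v *)
From HB Require Import structures.
Require Import Defs.
From mathcomp Require Import all_boot all_order all_algebra.
From Stdlib Require Import ClassicalEpsilon Classical.
Set Implicit Arguments. Unset Strict Implicit. Unset Printing Implicit Defensive.
Import GRing.Theory.
Local Open Scope ring_scope.

Definition pb (P : Prop) : bool := if excluded_middle_informative P then true else false.
Lemma pbP (P : Prop) : reflect P (pb P).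
Proof. rewrite /pb; case: excluded_middle_informative => h; constructor => //. Qed.

Record sm (R : nzRingType) (V : lmodType R) := SM { smP : pred V; smC : GRing.submod_closed smP }.

HB.instance Definition _ (R : nzRingType) (V : lmodType R) (U : sm V) :=
  GRing.isSubmodClosed.Build R V (smP U) (GRing.submod_closed_semi (smC U)).

Inductive subm (R : nzRingType) (V : lmodType R) (U : sm V) : predArgType := Subm u & u \in smP U.
Definition smval (R : nzRingType) (V : lmodType R) (U : sm V) (w : subm U) : V := let: Subm u _ := w in u.
HB.instance Definition _ (R : nzRingType) (V : lmodType R) (U : sm V) := [isSub of subm U for @smval R V U].
HB.instance Definition _ (R : nzRingType) (V : lmodType R) (U : sm V) := [Choice of subm U by <:].
HB.instance Definition _ (R : nzRingType) (V : lmodType R) (U : sm V) := [SubChoice_isSubZmodule of subm U by <:].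
HB.instance Definition _ (R : nzRingType) (V : lmodType R) (U : sm V) := [SubZmodule_isSubLmodule of subm U by <:].
Lemma smval_is_linear (R : nzRingType) (V : lmodType R) (U : sm V) : linear (@smval R V U). Proof. by []. Qed.
HB.instance Definition _ (R : nzRingType) (V : lmodType R) (U : sm V) := GRing.isSemilinear.Build R (subm U) V _ (@smval R V U)
  (GRing.semilinear_linear (@smval_is_linear R V U)).

Definition fg' (R : nzRingType) (V : lmodType R) : Prop :=
  exists n (u : nat -> V), forall x, exists c : 'I_n -> R, x = \sum_(i < n) c i *: u i.

Lemma sum_cast (R : nzRingType) (V : lmodType R) n m (e : m = n) (F : nat -> V) (c : 'I_n -> R) :
  \sum_(i < m) c (cast_ord e i) *: F i = \sum_(i < n) c i *: F i.
Proof. subst n; apply: eq_bigr => i _; by rewrite cast_ord_id. Qed.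

Lemma fg'_fg (R : nzRingType) (V : lmodType R) : fg' V -> fin_gen V.
Proof.
move=> [n [u Hu]]; exists (mkseq u n) => x.
have [c ->] := Hu x.
exists (fun i => c (cast_ord (size_mkseq u n) i)).
rewrite -(sum_cast (size_mkseq u n) u c).
apply: eq_bigr => i _; have hi : (i < n)%N by rewrite -{2}(size_mkseq u n). by rewrite nth_mkseq.
Qed.

Lemma fg_fg' (R : nzRingType) (V : lmodType R) : fin_gen V -> fg' V.
Proof. by move=> [s Hs]; exists (size s), (fun j => s`_j). Qed.
Lemma ac5 (V : zmodType) (a b c d e : V) : a + (b + c) + (d + e) = a + d + (b + e) + c.
Proof. by rewrite !addrA (addrAC _ c d) (addrAC _ c e) (addrAC a b d). Qed.

Lemma smN (R : nzRingType) (V : lmodType R) (A : V -> Prop) : submodule A -> forall x, A x -> A (- x).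
Proof. by move=> [h0 [hD hZ]] x hx; rewrite -scaleN1r; apply: hZ. Qed.
Lemma smB (R : nzRingType) (V : lmodType R) (A : V -> Prop) : submodule A -> forall x y, A x -> A y -> A (x - y).
Proof. move=> hA x y hx hy; case: (hA) => _ [hD _]; apply: hD => //; exact: smN. Qed.

Lemma chain_mono (T : Type) (N : nat -> T -> Prop) : (forall k x, N k.+1 x -> N k x) ->
  forall a b, (a <= b)%N -> forall x, N b x -> N a x.
Proof.
move=> hN a b; elim: b => [|b IH]; first by rewrite leqn0 => /eqP ->.
rewrite leq_eqVlt => /orP [/eqP -> //| hab] x hx; apply: IH => //; exact: hN.
Qed.

Lemma dcc (R : nzRingType) (V : lmodType R) : left_artinian R -> forall n (u : nat -> V) (W : V -> Prop),
  submodule W -> forall N : nat -> V -> Prop, (forall k, submodule (N k)) ->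
  (forall k x, N k.+1 x -> N k x) -> (forall k x, W x -> N k x) ->
  (forall k x, N k x -> exists w (c : 'I_n -> R), W w /\ x = w + \sum_(i<n) c i *: u i) ->
  exists n0, forall m, (n0 <= m)%N -> forall x, N m x <-> N n0 x.
Proof.
move=> art n; elim: n => [|n IH] u W hW N hN hdec hWN hb.
  exists 0%N => m _ x; split; first exact: chain_mono.
  move=> /hb [w [c [hw ->]]]; rewrite big_ord0 addr0; exact: hWN.
pose W' := fun x => exists w r, W w /\ x = w + r *: u 0%N.
have hW' : submodule W'.
  case: hW => [h0 [hD hZ]]; split; first by exists 0, 0; rewrite scale0r addr0.
  split.
    move=> x y [w1 [r1 [h1 ->]]] [w2 [r2 [h2 ->]]]; exists (w1 + w2), (r1 + r2); split; first exact: hD.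
    by rewrite scalerDl addrACA.
  move=> a x [w [r [h ->]]]; exists (a *: w), (a * r); split; first exact: hZ.
  by rewrite scalerDr scalerA.
pose N' := fun k x => exists y w, N k y /\ W' w /\ x = y + w.
have [n1 Hn1] : exists n0, forall m, (n0 <= m)%N -> forall x, N' m x <-> N' n0 x.
  apply: (IH (fun j => u j.+1) W' hW' N').
  - move=> k; case: (hN k) => [h0 [hD hZ]]; case: hW' => [h0' [hD' hZ']]; split.
      by exists 0, 0; rewrite addr0.
    split.
      move=> x y [y1 [w1 [a1 [b1 ->]]]] [y2 [w2 [a2 [b2 ->]]]]; exists (y1 + y2), (w1 + w2).
      by rewrite addrACA; split; [apply: hD|split; [apply: hD'|]].
    move=> a x [y [w [a1 [b1 ->]]]]; exists (a *: y), (a *: w); rewrite scalerDr; split; [exact: hZ|split; [exact: hZ'|]] => //.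
  - move=> k x [y [w [a1 [b1 ->]]]]; exists y, w; split => //; exact: hdec.
  - move=> k x hx; exists 0, x; split; first by case: (hN k).
    by split=> //; rewrite add0r.
  - move=> k x [y [w [a1 [[w0 [r0 [hw0 ->]]] ->]]]].
    have [w1 [c [hw1 ->]]] := hb k y a1.
    exists (w1 + w0 + (c ord0 + r0) *: u 0%N), (fun i => c (lift ord0 i)); split.
      exists (w1 + w0), (c ord0 + r0); split => //; case: hW => _ [hD _]; exact: hD.
    rewrite big_ord_recl /= scalerDl.
    exact: ac5.
pose I := fun k r => N k (r *: u 0%N).
have [n2 Hn2] : exists n0, forall m, (n0 <= m)%N -> forall r, I m r <-> I n0 r.
  apply: art.
  - move=> k; case: (hN k) => [h0 [hD hZ]]; split; first by rewrite /I scale0r.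
    split; last by move=> r x hx; rewrite /I -scalerA; apply: hZ.
    by move=> x y hx hy; rewrite /I scalerBl; apply: smB.
  - move=> k x; exact: hdec.
exists (maxn n1 n2) => m hm x; split; first by apply: chain_mono; last exact: hm.
move=> hx.
have hm1 : (n1 <= m)%N by apply: leq_trans hm; rewrite leq_maxl.
have hm2 : (n2 <= m)%N by apply: leq_trans hm; rewrite leq_maxr.
have hx1 : N n1 x by apply: (chain_mono hdec (leq_maxl n1 n2)).
have hx2 : N n2 x by apply: (chain_mono hdec (leq_maxr n1 n2)).
have : N' n1 x by exists x, 0; split => //; split; [case: hW'|rewrite addr0].
move=> /(Hn1 m hm1) [y [w [hy [[w0 [r [hw0 ->]]] ex]]]].
have hy2 : N n2 y by apply: (chain_mono hdec hm2).
have hr : I n2 r.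
  have h1 : N n2 (w0 + r *: u 0%N - w0).
    apply: smB => //; last exact: hWN.
    have -> : w0 + r *: u 0%N = y + (w0 + r *: u 0%N) - y by rewrite [RHS]addrC addKr.
    rewrite -ex; exact: (smB (hN n2) hx2 hy2).
  by rewrite /I; move: h1; rewrite addrAC subrr add0r.
have := (Hn2 m hm2 r).2 hr; rewrite /I => hrm.
rewrite ex. have [_ [hD _]] := hN m.
apply: (hD) => //; apply: (hD) => //; exact: hWN.
Qed.

Definition simpel (R : nzRingType) (V : lmodType R) (y : V) : Prop :=
  exists T : V -> Prop, simple_submodule T /\ T y.

Definition span (R : nzRingType) (V : lmodType R) (t : nat -> V) (k N : nat) (x : V) : Prop :=
  exists c : nat -> R, x = \sum_(k <= j < N) c j *: t j.

Lemma span_sm (R : nzRingType) (V : lmodType R) (t : nat -> V) k N : submodule (span t k N).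
Proof.
split; first by exists (fun _ => 0); rewrite big1 // => j _; rewrite scale0r.
split.
  move=> x y [c1 ->] [c2 ->]; exists (fun j => c1 j + c2 j); rewrite -big_split /=.
  by apply: eq_bigr => j _; rewrite scalerDl.
move=> a x [c ->]; exists (fun j => a * c j); rewrite scaler_sumr.
by apply: eq_bigr => j _; rewrite scalerA.
Qed.

Lemma sum_ext (R : nzRingType) (V : lmodType R) (t : nat -> V) (c : nat -> R) k N N' : (N <= N')%N ->
  \sum_(k <= j < N) c j *: t j = \sum_(k <= j < N') (if (j < N)%N then c j else 0) *: t j.
Proof.
move=> hN; rewrite (big_nat_widen _ _ _ _ _ hN) big_mkcond /=.
by apply: eq_bigr => j _; case: ifP => _; rewrite ?scale0r.
Qed.

Lemma simpel_socle (R : nzRingType) (V : lmodType R) (y : V) : simpel y -> socle y.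
Proof.
move=> h; exists [:: y]; split; last by rewrite big_seq1.
by move=> z; rewrite inE => /eqP ->.
Qed.

Lemma simple_cut (R : nzRingType) (V : lmodType R) (P : V -> Prop) (T : V -> Prop) y :
  submodule P -> simple_submodule T -> T y -> ~ P y -> forall r, P (r *: y) -> r *: y = 0.
Proof.
move=> hP [hT [_ hmin]] Ty nPy r hr.
have hU : submodule (fun z => T z /\ P z).
  case: hT => [a0 [aD aZ]]; case: hP => [b0 [bD bZ]]; split; first by split.
  split; first by move=> x z [? ?] [? ?]; split; [apply: aD|apply: bD].
  by move=> a x [? ?]; split; [apply: aZ|apply: bZ].
have [h0|h] := hmin _ hU (fun x hx => proj1 hx).
  by apply: h0; split => //; case: hT => [_ [_ aZ]]; apply: aZ.
by exfalso; apply: nPy; case: (h y Ty).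
Qed.

Definition nx (R : nzRingType) (V : lmodType R) (g : nat -> V) (n : nat) : V :=
  match excluded_middle_informative (exists y, simpel y /\ ~ span g 0 n y) with
  | left h => proj1_sig (constructive_indefinite_description _ h)
  | right _ => 0 end.

Lemma nxP (R : nzRingType) (V : lmodType R) (g : nat -> V) n :
  (exists y, simpel y /\ ~ span g 0 n y) -> simpel (nx g n) /\ ~ span g 0 n (nx g n).
Proof.
move=> h; rewrite /nx; case: excluded_middle_informative => // h'.
exact: proj2_sig (constructive_indefinite_description _ h').
Qed.

Fixpoint FF (R : nzRingType) (V : lmodType R) (n : nat) : nat -> V :=
  match n with 0 => fun _ => 0 | n'.+1 => fun j => if j == n' then nx (FF V n') n' else FF V n' j end.
Definition tt (R : nzRingType) (V : lmodType R) (j : nat) : V := FF V j.+1 j.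

Lemma FF_tt (R : nzRingType) (V : lmodType R) m j : (j < m)%N -> FF V m j = tt V j.
Proof.
elim: m => [//|m IH]; rewrite ltnS leq_eqVlt => /orP [/eqP ->|hj] /=.
  by rewrite /tt /= eqxx.
by rewrite (ltn_eqF hj) IH.
Qed.

Lemma span_FF (R : nzRingType) (V : lmodType R) n x : span (FF V n) 0 n x <-> span (tt V) 0 n x.
Proof.
have e : forall c : nat -> R, \sum_(0 <= j < n) c j *: FF V n j = \sum_(0 <= j < n) c j *: tt V j.
  by move=> c; apply: eq_big_nat => j /andP [_ hj]; rewrite FF_tt.
by split => -[c hc]; exists c; rewrite hc e.
Qed.

Lemma tt_prop (R : nzRingType) (V : lmodType R) :
  (forall n (t : nat -> V), (forall j, (j < n)%N -> simpel (t j)) -> exists y, simpel y /\ ~ span t 0 n y) ->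
  forall n j, (j < n)%N -> simpel (tt V j) /\ ~ span (tt V) 0 j (tt V j).
Proof.
move=> H; elim=> [//|n IH] j; rewrite ltnS leq_eqVlt => /orP [/eqP ->|hj]; last exact: IH.
have [y [hy1 hy2]] := H n (tt V) (fun j hj => proj1 (IH j hj)).
have := @nxP R V (FF V n) n; rewrite /tt /= eqxx => h.
have [h1 h2] := h (ex_intro _ y (conj hy1 (fun hs => hy2 (proj1 (span_FF n y) hs)))).
by split => // hs; apply: h2; apply/span_FF.
Qed.

Lemma indep (R : nzRingType) (V : lmodType R) (t : nat -> V) :
  (forall n r, span t 0 n (r *: t n) -> r *: t n = 0) ->
  forall k N x (a c : nat -> R), x = \sum_(0 <= j < k) a j *: t j -> x = \sum_(k <= j < N) c j *: t j -> x = 0.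
Proof.
move=> hcut k; elim=> [|N IH] x a c ha hc; first by rewrite hc big_geq.
case: (leqP k N) => hkN; last by rewrite hc big_geq.
move: hc; rewrite big_nat_recr //= => hc.
have h0 : c N *: t N = 0.
  apply: hcut; exists (fun j => if (j < k)%N then a j else - c j).
  rewrite (big_cat_nat (leq0n k) hkN) /=.
  have -> : c N *: t N = x - \sum_(k <= i < N) c i *: t i by rewrite hc addrAC subrr add0r.
  rewrite {1}ha; congr (_ + _).
    by apply: eq_big_nat => j /andP [_ ->].
  rewrite -sumrN; apply: eq_big_nat => j /andP [hj _]; rewrite ltnNge hj /=.
  by rewrite scaleNr.
by apply: (IH x a c) => //; rewrite hc h0 addr0.
Qed.

Lemma socle_fg (R : nzRingType) (V : lmodType R) : left_artinian R -> fg' V ->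
  exists n (t : nat -> V), (forall j, (j < n)%N -> simpel (t j)) /\ forall x, @socle R V x -> span t 0 n x.
Proof.
move=> art [ng [u hu]]; apply: NNPP => Hn.
have H' : forall n (t : nat -> V), (forall j, (j < n)%N -> simpel (t j)) -> exists y, simpel y /\ ~ span t 0 n y.
  move=> n t ht; apply: NNPP => hne; apply: Hn; exists n, t; split => //.
  have [s0 [sD _]] := span_sm t 0 n.
  move=> x [s [hs ->]]; elim: s hs => [|y s IHs] hs; first by rewrite big_nil.
  rewrite big_cons; apply: sD; last by apply: IHs => z hz; apply: hs; rewrite inE hz orbT.
  apply: NNPP => hny; apply: hne; exists y; split => //; apply: hs; exact: mem_head.
pose t := tt V; have tp := tt_prop H'.
have hcut : forall n r, span t 0 n (r *: t n) -> r *: t n = 0.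
  move=> n r hr; have [[T [hT Tt]] hn] := tp n.+1 n (ltnSn n).
  exact: (simple_cut (span_sm t 0 n) hT Tt hn).
pose C := fun k x => exists N (c : nat -> R), x = \sum_(k <= j < N) c j *: t j.
have C0 : forall k, C k 0 by move=> k; exists 0%N, (fun _ => 0); rewrite big_geq.
have [n0 Hn0] : exists n0, forall m, (n0 <= m)%N -> forall x, C m x <-> C n0 x.
  apply: (@dcc R V art ng u (fun x => x = 0)).
  - split => //; split; first by move=> x y -> ->; rewrite addr0.
    by move=> a x ->; rewrite scaler0.
  - move=> k; split; first exact: C0.
    split.
      move=> x y [N1 [c1 ->]] [N2 [c2 ->]].
      rewrite (sum_ext t c1 k (leq_maxl N1 N2)) (sum_ext t c2 k (leq_maxr N1 N2)).
      exists (maxn N1 N2), (fun j => (if (j < N1)%N then c1 j else 0) + (if (j < N2)%N then c2 j else 0)).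
      by rewrite -big_split /=; apply: eq_bigr => j _; rewrite scalerDl.
    move=> a x [N [c ->]]; exists N, (fun j => a * c j); rewrite scaler_sumr.
    by apply: eq_bigr => j _; rewrite scalerA.
  - move=> k x [N [c ->]].
    rewrite (sum_ext t c k.+1 (leq_maxl N k.+1)).
    exists (maxn N k.+1), (fun j => if j == k then 0 else if (j < N)%N then c j else 0).
    rewrite [RHS]big_ltn ?leq_maxr // eqxx scale0r add0r.
    by apply: eq_big_nat => j /andP [hj _]; rewrite gtn_eqF.
  - by move=> k x ->.
  - move=> k x _; have [c hc] := hu x; exists 0, c; split => //; by rewrite add0r.
have h1 : C n0 (t n0) by exists n0.+1, (fun _ => 1); rewrite big_nat1 scale1r.
have [N [c hc]] := (Hn0 n0.+1 (leqnSn n0) (t n0)).2 h1.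
have ht0 : t n0 = 0.
  apply: (indep hcut (a := fun j => if j == n0 then 1 else 0) _ hc).
  rewrite big_nat_recr //= eqxx scale1r big_nat_cond big1 ?add0r // => j /andP [/andP [_ hj] _].
  by rewrite ltn_eqF // scale0r.
have [_ hns] := tp n0.+1 n0 (ltnSn n0); apply: hns; rewrite -/t ht0.
by have [] := span_sm t 0 n0.
Qed.

Lemma Up_closed (R : nzRingType) (S Q : lmodType R) (i : {linear S -> Q}) (T : Q -> Prop) :
  submodule T -> GRing.submod_closed (fun s : S => pb (T (i s))).
Proof.
move=> [h0 [hD hZ]]; split; first by rewrite unfold_in /=; apply/pbP; rewrite linear0.
move=> a u v; rewrite !unfold_in /= => /pbP hu /pbP hv; apply/pbP.
by rewrite linearP; apply: hD => //; apply: hZ.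
Qed.

Lemma simple_alpha (R : nzRingType) (alpha beta : forall M : lmodType R, M -> Prop) :
  radical beta -> preradical alpha ->
  (forall M : lmodType R, in_F alpha M -> in_T beta M) ->
  forall (M Q : lmodType R) (p : {linear M -> Q}),
    fin_gen M -> fin_gen Q -> is_quotient_by (beta M) p ->
  forall (S : lmodType R) (i : {linear S -> Q}), fin_gen S -> injective i ->
  (forall y, @socle R Q y -> exists x, i x = y) ->
  forall (T : Q -> Prop), simple_submodule T -> forall s, T (i s) -> alpha S s.
Proof.
move=> [[bsub bfun] brad] [asub afun] hFT M Q p fgM fgQ hq S i fgS inji hsoc T hT s Ts.
have hTs := hT; case: hT => [hTsub [[z [Tz nz]] hmin]].
pose U := SM (Up_closed i hTsub).
have inU : forall w : subm U, T (i (smval w)).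
  by case=> w /=; rewrite unfold_in /= => /pbP.
have [sz isz] := hsoc z (simpel_socle (ex_intro _ T (conj hTs Tz))).
have szU : sz \in smP U by rewrite unfold_in /=; apply/pbP; rewrite isz.
pose uz : subm U := Subm szU.
have fgU : fin_gen (subm U).
  apply: fg'_fg; exists 1%N, (fun _ => uz) => w.
  pose Rz := fun q : Q => exists r, q = r *: z.
  have hRz : submodule Rz.
    split; first by exists 0; rewrite scale0r.
    split; first by move=> x y [r1 ->] [r2 ->]; exists (r1 + r2); rewrite scalerDl.
    by move=> a x [r ->]; exists (a * r); rewrite scalerA.
  have hsub : forall x, Rz x -> T x.
    by move=> x [r ->]; have [_ [_ hZ]] := hTsub; apply: hZ.
  have [h0|hall] := hmin Rz hRz hsub.
    by exfalso; apply: nz; apply: h0; exists 1; rewrite scale1r.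
  have [r hr] := hall _ (inU w).
  exists (fun _ => r); rewrite big_ord1; apply: val_inj => /=.
  apply: inji; by rewrite hr -isz -linearZ /=.
have asubU := asub _ fgU.
case: (classic (forall w, alpha (subm U) w -> w = 0)) => hA.
  have hTU : in_T beta (subm U) by apply: hFT; split.
  exfalso; apply: nz; rewrite -isz.
  have hb : beta Q (i (smval uz)).
    apply: (bfun _ _ i fgS fgQ); apply: (bfun _ _ (@smval R S U) fgU fgS); exact: hTU.2.
  exact: (brad M Q p fgM hq _ hb).
have [w0 [aw0 nw0]] : exists w, alpha (subm U) w /\ w <> 0.
  by apply: NNPP => h; apply: hA => w hw; apply: NNPP => hn; apply: h; exists w.
pose A := fun q : Q => exists w, alpha (subm U) w /\ q = i (smval w).
have hAs : submodule A.
  case: asubU => [a0 [aD aZ]]; split; first by exists 0; split => //; rewrite !linear0.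
  split; first by move=> x y [w1 [h1 ->]] [w2 [h2 ->]]; exists (w1 + w2); split; [apply: aD|rewrite !linearD].
  by move=> a x [w [h ->]]; exists (a *: w); split; [apply: aZ|rewrite !linearZ].
have hsubA : forall x, A x -> T x by move=> x [w [_ ->]].
have [h0|hall] := hmin A hAs hsubA.
  exfalso; apply: nw0; apply: val_inj; apply: inji; rewrite /= linear0.
  by apply: h0; exists w0.
have [w [aw e]] := hall _ Ts.
have -> : s = smval w by apply: inji.
exact: (afun _ _ (@smval R S U) fgU fgS).
Qed.

Theorem lemma2p2 (R : nzRingType)
  (alpha beta : forall M : lmodType R, M -> Prop) :
  left_artinian R ->
  radical beta ->
  preradical alpha ->
  (forall M : lmodType R, in_F alpha M -> in_T beta M) ->
  forall (M Q : lmodType R) (p : {linear M -> Q}),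
    fin_gen M -> is_quotient_by (beta M) p ->
  forall (S : lmodType R) (i : {linear S -> Q}),
    is_submodule_iso (@socle R Q) i ->
  in_T alpha S /\ in_F beta S.
Proof.
move=> art hrad hpre hFT M Q p fgM hq S i [inji hiso].
have fgQ : fin_gen Q.
  apply: fg'_fg; case: fgM => s hs; exists (size s), (fun j => p s`_j) => x.
  have [m <-] := hq.1 x; have [c ->] := hs m; exists c.
  by rewrite linear_sum; apply: eq_bigr => j _; rewrite linearZ.
have hsoc : forall y, @socle R Q y -> exists x, i x = y by move=> y /hiso.
have fgS : fin_gen S.
  have [n [t [ht hspan]]] := socle_fg art (fg_fg' fgQ).
  have hv : forall j, exists s, (j < n)%N -> i s = t j.
    move=> j; case: (ltnP j n) => hj; last by exists 0.
    have [s hs] := hsoc _ (simpel_socle (ht j hj)); by exists s.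
  pose v := fun j => proj1_sig (constructive_indefinite_description _ (hv j)).
  have hvP : forall j, (j < n)%N -> i (v j) = t j.
    by move=> j; exact: (proj2_sig (constructive_indefinite_description _ (hv j))).
  apply: fg'_fg; exists n, v => x.
  have [c hc] := hspan _ (proj2 (hiso (i x)) (ex_intro _ x erefl)).
  exists (fun j => c j); apply: inji; rewrite hc linear_sum -(big_mkord xpredT (fun j => i (c j *: v j))).
  by apply: eq_big_nat => j /andP [_ hj]; rewrite linearZ hvP.
have [[bsub bfun] brad] := hrad.
split; last first.
  split => // x hx; apply: inji; rewrite linear0.
  exact: (brad M Q p fgM hq _ (bfun _ _ i fgS fgQ x hx)).
split => // x.
have [a0 [aD _]] := (hpre.1 S fgS).
have := proj2 (hiso (i x)) (ex_intro _ x erefl).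
move=> [s [hs e]]; elim: s x hs e => [|y s IH] x hs e.
  have -> : x = 0 by apply: inji; rewrite linear0 e big_nil.
  exact: a0.
move: e; rewrite big_cons => e.
have [T [hT Ty]] := hs y (mem_head y s).
have [s1 e1] := hsoc y (simpel_socle (ex_intro _ T (conj hT Ty))).
have hs' : forall z, z \in s -> simpel z by move=> z hz; apply: hs; rewrite inE hz orbT.
have [s2 e2] := hsoc (\sum_(z <- s) z) (ex_intro _ s (conj hs' erefl)).
have -> : x = s1 + s2 by apply: inji; rewrite linearD e1 e2.
apply: aD.
  apply: (simple_alpha hrad hpre hFT fgM fgQ hq fgS inji hsoc hT); by rewrite e1.
by apply: IH => //; rewrite e2.
Qed.
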